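(* Let $\mathrm{k}$ be an infinite field. For $n,m\in\{2,3\}$, the $\mathrm{k}$-algebra $\mathrm{k}[T]/(T^n)\times\mathrm{k}[T]/(T^m)$ has infinitely many subalgebras.
   Context: Subalgebras are unital (contain $1$). *)

(* Defs.v *)
From HB Require Import structures.
From mathcomp Require Import all_boot all_order all_algebra.
Set Implicit Arguments. Unset Strict Implicit. Unset Printing Implicit Defensive.
Import GRing.Theory.
Local Open Scope ring_scope.

(* Concrete model of the k-algebra  A = k[T]/(T^n) x k[T]/(T^m):
   elements are pairs (p, q) of polynomials in normal form
   (p = p %% 'X^n, q = q %% 'X^m); operations are the componentwise
   polynomial operations followed by reduction to normal form. *)
Section TruncProd.
Variables (K : fieldType) (n m : nat).
Definition pairT := ({poly K} * {poly K})%type.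

Definition redA (x : pairT) : pairT := (x.1 %% 'X^n, x.2 %% 'X^m).
Definition inA (x : pairT) : bool := redA x == x.
Definition oneA : pairT := redA (1, 1).
Definition addA (x y : pairT) : pairT := (x.1 + y.1, x.2 + y.2).
Definition scaleA (c : K) (x : pairT) : pairT := (c *: x.1, c *: x.2).
Definition mulA (x y : pairT) : pairT := redA (x.1 * y.1, x.2 * y.2).

Definition is_subalgA (S : pred pairT) : Prop :=
  [/\ forall x, S x -> inA x,
      S oneA,
      forall x y, S x -> S y -> S (addA x y),
      forall c x, S x -> S (scaleA c x)
    & forall x y, S x -> S y -> S (mulA x y)].
End TruncProd.

(* Main.v *)
Require Import Defs.
From mathcomp Require Import all_boot all_order all_algebra.
From Stdlib Require Import ClassicalEpsilon Classical.
Local Open Scope ring_scope.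
Import GRing.Theory.

Lemma coef_modXn (K : fieldType) (n i : nat) (p : {poly K}) :
  (i < n)%N -> (p %% 'X^n)`_i = p`_i.
Proof.
move=> lt; rewrite [in RHS](divp_eq p 'X^n) coefD coefMXn lt add0r //.
Qed.

Definition Sa {K : fieldType} (n m : nat) (a : K) : pred (pairT K) :=
  fun x => [&& inA n m x, x.1`_0 == x.2`_0 & x.1`_1 == a * x.2`_1].

Lemma Sa_sub (K : fieldType) (n m : nat) (a : K) :
  (1 < n)%N -> (1 < m)%N -> is_subalgA n m (Sa n m a).
Proof.
move=> hn hm; have hn0 : (0 < n)%N by apply: ltnW.
have hm0 : (0 < m)%N by apply: ltnW.
split.
- by move=> x /and3P[].
- rewrite /Sa /oneA /inA /redA /= !coef_modXn // !modp_id eqxx /=.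
  by rewrite eqxx coef1 /= mulr0.
- move=> [p q] [p' q'] /and3P[/eqP/= [e1 e2] /eqP h0 /eqP h1]
    /and3P[/eqP/= [e1' e2'] /eqP h0' /eqP h1'].
  rewrite /Sa /inA /redA /Defs.addA /= !modpD e1 e2 e1' e2' eqxx /=.
  by rewrite !coefD h0 h0' h1 h1' mulrDr !eqxx.
- move=> c [p q] /and3P[/eqP/= [e1 e2] /eqP h0 /eqP h1].
  rewrite /Sa /inA /redA /scaleA /= !modpZl e1 e2 eqxx /=.
  by rewrite !coefZ h0 h1 mulrCA !eqxx.
- move=> [p q] [p' q'] /and3P[_ /eqP h0 /eqP h1]
    /and3P[_ /eqP h0' /eqP h1'].
  rewrite /Sa /inA /redA /Defs.mulA /= !modp_id eqxx /=.
  rewrite !coef_modXn // !coefM !big_ord_recr !big_ord0 /= !add0r.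
  rewrite !subnn !subn0 /= h0 h0' h1 h1' !eqxx /=.
  by rewrite mulrDr mulrCA -mulrA.
Qed.

Lemma Sa_test {K : fieldType} (n m : nat) (a b : K) :
  (1 < n)%N -> (1 < m)%N -> Sa n m b (a *: 'X, 'X) = (a == b).
Proof.
move=> hn hm.
have sX k : (1 < k)%N -> forall c : K, (c *: 'X) %% 'X^k = c *: 'X.
  move=> hk c; rewrite modp_small // size_polyXn.
  by apply: (leq_ltn_trans (size_scale_leq _ _)); rewrite size_polyX.
rewrite /Sa /inA /redA /= sX // -[X in X %% _](scale1r (R:=K)) sX // scale1r eqxx /=.
by rewrite !coefZ !coefX /= !mulr0 eqxx !mulr1 /=.
Qed.

Theorem lemma3p7 (K : fieldType)
  (Kinf : forall s : seq K, exists x : K, x \notin s)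
  (n m : nat) (hn : n \in [:: 2%N; 3%N]) (hm : m \in [:: 2%N; 3%N]) :
  forall (N : nat) (Ss : nat -> pred (pairT K)),
    exists S : pred (pairT K),
      is_subalgA n m S /\
      (forall i, (i < N)%N -> exists x, S x != Ss i x).
Proof.
have hn1 : (1 < n)%N by move: hn; rewrite !inE => /orP[]/eqP->.
have hm1 : (1 < m)%N by move: hm; rewrite !inE => /orP[]/eqP->.
move=> N Ss.
pose g (i : nat) : K :=
  match excluded_middle_informative
          (exists a : K, forall x, Sa n m a x = Ss i x) with
  | left h => proj1_sig (constructive_indefinite_description _ h)
  | right _ => 0
  end.
have [a ha] := Kinf [seq g i | i <- iota 0 N].
exists (Sa n m a); split; first exact: Sa_sub.
move=> i iN; apply: NNPP => hne.
have hall : forall x, Sa n m a x = Ss i x.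
  move=> x; apply/eqP; apply: NNPP => hx; apply: hne; exists x; exact/negP.
apply: (negP ha); apply/mapP; exists i.
  by rewrite mem_iota add0n.
rewrite /g.
case: excluded_middle_informative => [h|h]; last first.
  by exfalso; apply: h; exists a.
case: constructive_indefinite_description => b /= hb.
have := hb (a *: 'X, 'X); rewrite -hall !Sa_test // eqxx => /eqP.
by move=> ->.
Qed.
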